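(* Let $T$ be the triangle, a linear map $1\to1$ with matrix $\begin{pmatrix}1&1\\0&1\end{pmatrix}$. For $\lambda\in\mathbb{Z}[\tfrac12]$ with $\lambda\ge0$, let $L_\lambda$ be the lambda box, a linear map $1\to1$ with matrix $\begin{pmatrix}1&0\\0&\lambda\end{pmatrix}$. Then $T$ is expressible by a diagram of the $\frac{\pi}{4}$-fragment ZX-calculus, that is, there is such a diagram whose standard interpretation equals the matrix of $T$. Likewise, for every $\lambda\in\mathbb{Z}[\tfrac12]$ with $\lambda\ge 0$, $L_\lambda$ is expressible by a diagram of the $\frac{\pi}{4}$-fragment ZX-calculus.
   Context: The $\frac{\pi}{4}$-fragment ZX-calculus is built as follows. Its diagrams are generated from the generators below, using sequential composition $\circ$ and parallel composition (tensor) $\otimes$. The generators and their standard interpretations $\llbracket\cdot\rrbracket$ as complex matrices are: - the green spider $R_Z^{(n,m)}:n\to m$, with $\llbracket R_Z^{(n,m)}\rrbracket=|0\rangle^{\otimes m}\langle 0|^{\otimes n}+|1\rangle^{\otimes m}\langle 1|^{\otimes n}$; - the green phase $A_\alpha:1\to1$ for $\alpha\in\{\frac{k\pi}{4}:k=0,\dots,7\}$, with $\llbracket A_\alpha\rrbracket=|0\rangle\langle0|+e^{i\alpha}|1\rangle\langle1|$; - the Hadamard gate $H:1\to 1$, with $\llbracket H\rrbracket=\frac1{\sqrt2}\begin{pmatrix}1&1\\1&-1\end{pmatrix}$; - the swap $2\to2$; - the identity $1\to1$; - the empty diagram $0\to0$, interpreted as the scalar $1$; - the cap $0\to2$, with interpretation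 $|00\rangle+|11\rangle$; - the cup $2\to0$, with interpretation $\langle00|+\langle11|$. The interpretation is extended by matrix product for $\circ$ and Kronecker product for $\otimes$. The triangle and the lambda box are not among these generators. *)

(* Defs.v *)
From HB Require Import structures.
From mathcomp Require Import all_boot all_order all_algebra all_field.
Set Implicit Arguments. Unset Strict Implicit. Unset Printing Implicit Defensive.
Import Order.TTheory GRing.Theory Num.Theory.
Local Open Scope ring_scope.

(* Diagrams of the pi/4-fragment ZX-calculus, typed by (inputs, outputs). *)
Inductive zx : nat -> nat -> Type :=
| ZSpider (n m : nat) : zx n m
| ZPhase (k : 'I_8) : zx 1 1
| ZHad : zx 1 1
| ZSwap : zx 2 2
| ZId : zx 1 1
| ZEmpty : zx 0 0
| ZCap : zx 0 2
| ZCup : zx 2 0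
| ZComp (n m p : nat) : zx m p -> zx n m -> zx n p      (* ZComp d2 d1 = d2 o d1 *)
| ZTens (n1 m1 n2 m2 : nat) : zx n1 m1 -> zx n2 m2 -> zx (n1 + n2) (m1 + m2).

(* entry of a matrix at natural indices, 0 outside the range *)
Definition mget (p q : nat) (A : 'M[algC]_(p, q)) (r c : nat) : algC :=
  match @insub nat (fun x => x < p)%N 'I_p r, @insub nat (fun x => x < q)%N 'I_q c with
  | Some i, Some j => A i j
  | _, _ => 0
  end.

(* Kronecker product, standard (big-endian) convention *)
Definition kron (p1 q1 p2 q2 : nat) (A : 'M[algC]_(p1, q1)) (B : 'M[algC]_(p2, q2))
  : 'M[algC]_(p1 * p2, q1 * q2) :=
  \matrix_(i, j) (mget A (i %/ p2) (j %/ q2) * mget B (i %% p2) (j %% q2)).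

(* e^{i pi/4} *)
Definition omega8 : algC := (1 + 'i) / sqrtC 2.

Definition spider_mx (n m : nat) : 'M[algC]_(2 ^ m, 2 ^ n) :=
  \matrix_(i, j) (((i == 0%N :> nat) && (j == 0%N :> nat))%:R
                + ((i == (2 ^ m).-1 :> nat) && (j == (2 ^ n).-1 :> nat))%:R).

Definition phase_mx (k : 'I_8) : 'M[algC]_(2 ^ 1, 2 ^ 1) :=
  \matrix_(i, j) (if (i == j :> nat) then (if (i == 0%N :> nat) then 1 else omega8 ^+ k) else 0).

Definition had_mx : 'M[algC]_(2 ^ 1, 2 ^ 1) :=
  \matrix_(i, j) ((sqrtC 2)^-1 * (if ((i == 1%N :> nat) && (j == 1%N :> nat)) then -1 else 1)).

Definition swap_mx : 'M[algC]_(2 ^ 2, 2 ^ 2) :=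
  \matrix_(i, j) (((i == j :> nat) && ((i == 0%N :> nat) || (i == 3%N :> nat)))
                  || ((i == 1%N :> nat) && (j == 2%N :> nat))
                  || ((i == 2%N :> nat) && (j == 1%N :> nat)))%:R.

Definition id_mx1 : 'M[algC]_(2 ^ 1, 2 ^ 1) := 1%:M.

Definition empty_mx : 'M[algC]_(2 ^ 0, 2 ^ 0) := 1%:M.

Definition cap_mx : 'M[algC]_(2 ^ 2, 2 ^ 0) :=
  \matrix_(i, j) ((i == 0%N :> nat) || (i == 3%N :> nat))%:R.

Definition cup_mx : 'M[algC]_(2 ^ 0, 2 ^ 2) :=
  \matrix_(i, j) ((j == 0%N :> nat) || (j == 3%N :> nat))%:R.

Fixpoint interp (n m : nat) (d : zx n m) : 'M[algC]_(2 ^ m, 2 ^ n) :=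
  match d in zx n m return 'M[algC]_(2 ^ m, 2 ^ n) with
  | ZSpider n m => spider_mx n m
  | ZPhase k => phase_mx k
  | ZHad => had_mx
  | ZSwap => swap_mx
  | ZId => id_mx1
  | ZEmpty => empty_mx
  | ZCap => cap_mx
  | ZCup => cup_mx
  | ZComp _ _ _ d2 d1 => interp d2 *m interp d1
  | ZTens n1 m1 n2 m2 d1 d2 =>
      castmx (esym (expnD 2 m1 m2), esym (expnD 2 n1 n2)) (kron (interp d1) (interp d2))
  end.

Definition triangle_mx : 'M[algC]_(2 ^ 1, 2 ^ 1) :=
  \matrix_(i, j) (if ((i == 1%N :> nat) && (j == 0%N :> nat)) then 0 else 1).

Definition lambda_mx (l : algC) : 'M[algC]_(2 ^ 1, 2 ^ 1) :=
  \matrix_(i, j) (if (i == j :> nat) then (if (i == 0%N :> nat) then 1 else l) else 0).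

Definition dyadic (l : algC) : Prop := exists (a : int) (k : nat), l = a%:~R / 2 ^+ k.

(* Main.v *)
Require Import Defs.
From mathcomp Require Import all_boot all_order all_algebra all_field.
From mathcomp Require Import ring.
Import Order.TTheory GRing.Theory Num.Theory.
Local Open Scope ring_scope.

Notation w := omega8.
Notation s := (sqrtC (2 : algC)).
Notation r := ((sqrtC (2 : algC))^-1).

Lemma s_neq0 : s != 0.
Proof. by rewrite sqrtC_eq0 pnatr_eq0. Qed.

Lemma s2 : s * s = 2.
Proof. by rewrite -expr2 sqrtCK. Qed.

Lemma w2 : w ^+ 2 = 'i.
Proof.
rewrite /omega8 expr_div_n sqrtCK.
have -> : (1 + 'i) ^+ 2 = 2 * 'i :> algC.
  by rewrite sqrrD sqrCi expr1n; ring.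
by rewrite mulrC mulrA mulVf ?mul1r // pnatr_eq0.
Qed.

Lemma w4 : w ^+ 4 = -1.
Proof. by rewrite (_ : 4 = 2 * 2)%N // exprM w2 sqrCi. Qed.

Lemma s_w : s = w - w ^+ 3.
Proof.
have -> : w ^+ 3 = w * 'i by rewrite -w2 -exprS.
rewrite /omega8.
have hi : 'i * 'i = -1 :> algC by rewrite -expr2 sqrCi.
have -> : (1 + 'i) / s - (1 + 'i) / s * 'i = (1 - 'i * 'i) / s by ring.
rewrite hi (_ : 1 - -1 = 2 :> algC); last by rewrite opprK.

by rewrite -[X in _ = X / _]s2 mulfK ?s_neq0.
Qed.

Lemma r_w : r = (w - w ^+ 3) / 2.
Proof.
rewrite -s_w; apply: (mulfI s_neq0).
by rewrite mulfV ?s_neq0 // mulrA s2 mulfV // pnatr_eq0.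
Qed.
Definition Q4 := (rat * rat * rat * rat)%type.
Definition emb (x : Q4) : algC :=
  let: (a, b, c, d) := x in ratr a + ratr b * w + ratr c * w ^+ 2 + ratr d * w ^+ 3.
Definition q4add (x y : Q4) : Q4 :=
  let: (a0, a1, a2, a3) := x in let: (b0, b1, b2, b3) := y in
  (a0 + b0, a1 + b1, a2 + b2, a3 + b3).
Definition q4opp (x : Q4) : Q4 :=
  let: (a0, a1, a2, a3) := x in (- a0, - a1, - a2, - a3).
Definition q4mul (x y : Q4) : Q4 :=
  let: (a0, a1, a2, a3) := x in let: (b0, b1, b2, b3) := y in
  (a0 * b0 - a1 * b3 - a2 * b2 - a3 * b1,
   a0 * b1 + a1 * b0 - a2 * b3 - a3 * b2,
   a0 * b2 + a1 * b1 + a2 * b0 - a3 * b3,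
   a0 * b3 + a1 * b2 + a2 * b1 + a3 * b0).

Lemma emb_add x y : emb (q4add x y) = emb x + emb y.
Proof.
case: x => [[[a0 a1] a2] a3]; case: y => [[[b0 b1] b2] b3] /=.
rewrite !rmorphD /=; ring.
Qed.

Lemma emb_opp x : emb (q4opp x) = - emb x.
Proof.
case: x => [[[a0 a1] a2] a3] /=.
rewrite !rmorphN /=; ring.
Qed.

Lemma emb_mul x y : emb (q4mul x y) = emb x * emb y.
Proof.
case: x => [[[a0 a1] a2] a3]; case: y => [[[b0 b1] b2] b3] /=.
rewrite !(rmorphD, rmorphN, rmorphM) /=.
set A0 := ratr a0; set A1 := ratr a1; set A2 := ratr a2; set A3 := ratr a3.
set B0 := ratr b0; set B1 := ratr b1; set B2 := ratr b2; set B3 := ratr b3.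
have h := w4.
have E : forall z : algC, z = z + (w ^+ 4 + 1) * ((A1 * B3 + A2 * B2 + A3 * B1)
   + (A2 * B3 + A3 * B2) * w + A3 * B3 * w ^+ 2).
  by move=> z; rewrite h addNr mul0r addr0.
rewrite [LHS]E; ring.
Qed.

Inductive ex :=
| EW | ER | EHalf | ENat of nat | EAdd of ex & ex | EMul of ex & ex | EOpp of ex
| EPow of ex & nat.

Fixpoint eval (e : ex) : algC :=
  match e with
  | EW => w
  | ER => r
  | EHalf => 2^-1
  | ENat n => n%:R
  | EAdd a b => eval a + eval b
  | EMul a b => eval a * eval b
  | EOpp a => - eval a
  | EPow a n => eval a ^+ n
  end.

Fixpoint q4pow (x : Q4) (n : nat) : Q4 :=
  match n with 0 => (1, 0, 0, 0) | n.+1 => q4mul x (q4pow x n) end.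

Fixpoint norm (e : ex) : Q4 :=
  match e with
  | EW => (0, 1, 0, 0)
  | ER => (0, (2%:R)^-1, 0, - (2%:R)^-1)
  | EHalf => ((2%:R)^-1, 0, 0, 0)
  | ENat n => (n%:R, 0, 0, 0)
  | EAdd a b => q4add (norm a) (norm b)
  | EMul a b => q4mul (norm a) (norm b)
  | EOpp a => q4opp (norm a)
  | EPow a n => q4pow (norm a) n
  end.
Lemma embW : emb (0, 1, 0, 0) = w.
Proof. rewrite /emb !rmorph0 rmorph1 !mul0r mul1r !addr0 add0r //. Qed.
Lemma embN (n : nat) : emb (n%:R, 0, 0, 0) = n%:R.
Proof. rewrite /emb !rmorph0 !mul0r !addr0. by rewrite rmorph_nat. Qed.
Lemma embH : emb ((2%:R)^-1, 0, 0, 0) = 2^-1.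
Proof. rewrite /emb !rmorph0 !mul0r !addr0 rmorphV ?unitfE ?pnatr_eq0 // rmorph_nat //. Qed.
Lemma embR : emb (0, (2%:R)^-1, 0, - (2%:R)^-1) = r.
Proof.
rewrite /emb r_w !rmorph0 !mul0r add0r addr0 rmorphN !rmorphV ?unitfE ?pnatr_eq0 // rmorph_nat.

ring.
Qed.

Lemma emb1 : emb (1, 0, 0, 0) = 1.
Proof. by rewrite /emb !rmorph0 !mul0r !addr0 rmorph1. Qed.

Lemma eval_norm e : eval e = emb (norm e).
Proof.
elim: e.
- by rewrite embW.
- by rewrite embR.
- by rewrite embH.
- by move=> n; rewrite embN.
- by move=> a IHa b IHb; change (eval a + eval b = emb (q4add (norm a) (norm b))); rewrite emb_add IHa IHb.
- by move=> a IHa b IHb; change (eval a * eval b = emb (q4mul (norm a) (norm b))); rewrite emb_mul IHa IHb.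
- by move=> a IHa; change (- eval a = emb (q4opp (norm a))); rewrite emb_opp IHa.
- move=> a IHa n; change (eval a ^+ n = emb (q4pow (norm a) n)).
  elim: n => [|n IH]; first by rewrite expr0 emb1.
  by change (eval a ^+ n.+1 = emb (q4mul (norm a) (q4pow (norm a) n))); rewrite emb_mul exprS IH IHa.
Qed.

Lemma reflect_eq e1 e2 : (norm e1 == norm e2) -> eval e1 = eval e2.
Proof. by rewrite !eval_norm => /eqP ->. Qed.
Ltac reify t :=
  lazymatch t with
  | GRing.add ?a ?b => let x := reify a in let y := reify b in constr:(EAdd x y)
  | GRing.mul ?a ?b => let x := reify a in let y := reify b in constr:(EMul x y)
  | GRing.opp ?a => let x := reify a in constr:(EOpp x)
  | GRing.exp ?a ?n => let x := reify a in constr:(EPow x n)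
  | omega8 => constr:(EW)
  | GRing.inv (sqrtC _) => constr:(ER)
  | GRing.inv _ => constr:(EHalf)
  | GRing.natmul (GRing.one _) ?n => constr:(ENat n)
  | GRing.one _ => constr:(ENat 1)
  | GRing.zero _ => constr:(ENat 0)
  end.

Ltac qsolve :=
  match goal with |- ?a = ?b =>
    let x := reify a in let y := reify b in
    change (eval x = eval y); apply: reflect_eq; vm_compute; reflexivity
  end.


Definition M2 (a b c d : algC) : 'M[algC]_(2 ^ 1, 2 ^ 1) :=
  \matrix_(i, j) if (i == 0%N :> nat) then (if (j == 0%N :> nat) then a else b)
                 else (if (j == 0%N :> nat) then c else d).
Definition R2 (a b : algC) : 'M[algC]_(2 ^ 0, 2 ^ 1) :=
  \matrix_(i, j) if (j == 0%N :> nat) then a else b.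

Lemma M2_mul a b c d a' b' c' d' :
  M2 a b c d *m M2 a' b' c' d' =
  M2 (a * a' + b * c') (a * b' + b * d') (c * a' + d * c') (c * b' + d * d').
Proof.
apply/matrixP => i j; rewrite !mxE.
rewrite (big_ord_recl 1) big_ord_recl big_ord0 !mxE /=.
rewrite addr0; case: i => [[|[|i]] Hi]; case: j => [[|[|j]] Hj] //.
Qed.

Lemma R2_mul a b a' b' c' d' :
  R2 a b *m M2 a' b' c' d' = R2 (a * a' + b * c') (a * b' + b * d').
Proof.
apply/matrixP => i j; rewrite !mxE.
rewrite (big_ord_recl 1) big_ord_recl big_ord0 !mxE /=.
by rewrite addr0; case: j => [[|[|j]] Hj].
Qed.

Lemma phaseE k : interp (ZPhase k) = M2 1 0 0 (w ^+ k).
Proof.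
apply/matrixP => i j; rewrite !mxE.
by case: i => [[|[|i]] Hi]; case: j => [[|[|j]] Hj].
Qed.

Lemma hadE : interp ZHad = M2 r r r (- r).
Proof.
apply/matrixP => i j; rewrite !mxE.
by case: i => [[|[|i]] Hi]; case: j => [[|[|j]] Hj] //=; rewrite ?mulr1 ?mulrN1.
Qed.

Lemma z10E : interp (ZSpider 1 0) = R2 1 1.
Proof.
apply/matrixP => i j; rewrite !mxE.
by case: i => [[|i] Hi]; case: j => [[|[|j]] Hj] //=; rewrite ?addr0 ?add0r.
Qed.

Lemma M2_ext a b c d a' b' c' d' : a = a' -> b = b' -> c = c' -> d = d' ->
  M2 a b c d = M2 a' b' c' d'.
Proof. by move=> -> -> -> ->. Qed.

Lemma mgetE p q (A : 'M[algC]_(p, q)) r c (hr : (r < p)%N) (hc : (c < q)%N) :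
  mget A r c = A (Ordinal hr) (Ordinal hc).
Proof. by rewrite /mget !insubT. Qed.

Ltac mget_simpl :=
  repeat match goal with |- context [@mget ?p ?q ?A ?t1 ?t2] =>
    let k1 := eval vm_compute in t1 in let k2 := eval vm_compute in t2 in
    change t1 with k1; change t2 with k2;
    rewrite (@mgetE p q A k1 k2 isT isT) end.

Definition gad (e : zx 1 0) : zx 1 1 := ZComp (ZTens ZId e) (ZSpider 1 2).

Lemma gadE e a b : interp e = R2 a b -> interp (gad e) = M2 a 0 0 b.
Proof.
move=> He /=; rewrite He.
apply/matrixP => i j; rewrite !mxE.
rewrite !big_ord_recl big_ord0 !castmxE !mxE.
case: i => [[|[|i]] Hi]; case: j => [[|[|j]] Hj] //.
all: mget_simpl; rewrite !mxE /=; ring.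
Qed.

Definition q0 : Q4 := (0, 0, 0, 0).
Definition q1 : Q4 := (1, 0, 0, 0).
Definition qw : Q4 := (0, 1, 0, 0).
Definition qr : Q4 := (0, (2%:R)^-1, 0, - (2%:R)^-1).

Lemma emb0 : emb q0 = 0.
Proof. by rewrite /emb /q0 !rmorph0 !mul0r !addr0. Qed.
Lemma emb1' : emb q1 = 1.
Proof. exact: emb1. Qed.

Lemma embpow k : w ^+ k = emb (q4pow qw k).
Proof.
elim: k => [|k IH]; first by rewrite expr0 emb1.
by rewrite exprS IH (_ : q4pow qw k.+1 = q4mul qw (q4pow qw k)) // emb_mul embW.
Qed.

Definition M2Q (a b c d : Q4) := M2 (emb a) (emb b) (emb c) (emb d).
Definition R2Q (a b : Q4) := R2 (emb a) (emb b).

Lemma M2Q_mul a b c d a' b' c' d' :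
  M2Q a b c d *m M2Q a' b' c' d' =
  M2Q (q4add (q4mul a a') (q4mul b c')) (q4add (q4mul a b') (q4mul b d'))
      (q4add (q4mul c a') (q4mul d c')) (q4add (q4mul c b') (q4mul d d')).
Proof. by rewrite /M2Q M2_mul !emb_add !emb_mul. Qed.

Lemma R2Q_mul a b a' b' c' d' :
  R2Q a b *m M2Q a' b' c' d' =
  R2Q (q4add (q4mul a a') (q4mul b c')) (q4add (q4mul a b') (q4mul b d')).
Proof. by rewrite /R2Q /M2Q R2_mul !emb_add !emb_mul. Qed.

Lemma compE n m p (d2 : zx m p) (d1 : zx n m) :
  interp (ZComp d2 d1) = interp d2 *m interp d1.
Proof. by []. Qed.

Definition Ph (k : nat) (h : (k < 8)%N) : zx 1 1 := ZPhase (Ordinal h).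

Lemma PhQ k h : interp (@Ph k h) = M2Q q1 q0 q0 (q4pow qw k).
Proof. by rewrite /Ph phaseE /M2Q emb0 emb1 -embpow. Qed.

Lemma HQ : interp ZHad = M2Q qr qr qr (q4opp qr).
Proof. by rewrite hadE /M2Q emb_opp embR. Qed.

Lemma Z10Q : interp (ZSpider 1 0) = R2Q q1 q1.
Proof. by rewrite z10E /R2Q emb1. Qed.

Lemma gadQ e a b : interp e = R2Q a b -> interp (gad e) = M2Q a q0 q0 b.
Proof. by move=> /gadE ->; rewrite /M2Q emb0. Qed.

Ltac qnorm :=
  repeat match goal with
  | |- context [q4add ?x ?y] => let v := eval vm_compute in (q4add x y) in change (q4add x y) with v
  | |- context [q4mul ?x ?y] => let v := eval vm_compute in (q4mul x y) in change (q4mul x y) with v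
  | |- context [q4opp ?x] => let v := eval vm_compute in (q4opp x) in change (q4opp x) with v
  | |- context [q4pow ?x ?n] => let v := eval vm_compute in (q4pow x n) in change (q4pow x n) with v
  end.

Ltac qmul := repeat (first [rewrite M2Q_mul | rewrite R2Q_mul]; qnorm).

Definition Xd : zx 1 1 := ZComp ZHad (ZComp (@Ph 4 isT) ZHad).

Lemma XQ : interp Xd = M2Q q0 q1 q1 q0.
Proof. by rewrite /Xd !compE HQ PhQ; qnorm; qmul. Qed.

Definition o0 : 'I_(2 ^ 1) := @Ordinal (2 ^ 1) 0 isT.
Definition o1 : 'I_(2 ^ 1) := @Ordinal (2 ^ 1) 1 isT.
Definition diagM (A : 'M[algC]_(2 ^ 1, 2 ^ 1)) :=
  M2 (A o0 o0 + A o1 o0) 0 0 (A o0 o1 + A o1 o1).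

Fact gk : unit. Proof. exact tt. Qed.
Definition gadL : zx 1 0 -> zx 1 1 := locked_with gk gad.
Lemma gadLE e : gadL e = gad e. Proof. by rewrite /gadL unlock. Qed.

Lemma gadZ (U : zx 1 1) : interp (gadL (ZComp (ZSpider 1 0) U)) = diagM (interp U).
Proof.
rewrite gadLE.
rewrite /diagM (@gadE _ (interp U o0 o0 + interp U o1 o0) (interp U o0 o1 + interp U o1 o1)) //.
rewrite compE z10E; apply/matrixP => i j; rewrite !mxE.
rewrite (big_ord_recl 1) big_ord_recl big_ord0 !mxE /=.
case: i => [[|i] Hi] //; case: j => [[|[|j]] Hj] //=; rewrite !mul1r addr0.
- by congr (_ + _); congr (interp U _ _); apply: val_inj.
- by congr (_ + _); congr (interp U _ _); apply: val_inj.
Qed.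

Lemma diagMQ a b c d : diagM (M2Q a b c d) = M2Q (q4add a c) q0 q0 (q4add b d).
Proof. by rewrite /diagM /M2Q emb0 !emb_add !mxE. Qed.

Definition e1 : zx 1 0 := ZComp (ZSpider 1 0) (ZComp (@Ph 1 isT) (ZComp ZHad (@Ph 4 isT))).
Definition G1 : zx 1 1 := gadL e1.

Ltac evalQ := rewrite ?compE; repeat (rewrite gadZ ?compE); rewrite ?HQ ?PhQ ?XQ; qnorm;
  repeat (qmul; rewrite diagMQ; qnorm); qmul.

Definition Pd5 : zx 1 1 := ZComp (@Ph 5 isT) (ZComp Xd (ZComp (@Ph 5 isT) Xd)).
Definition Sc : zx 1 1 := ZComp Pd5 (ZComp G1 (ZComp Xd (ZComp G1 Xd))).
Definition Mm : zx 1 1 := ZComp ZHad (ZComp G1 (ZComp ZHad (ZComp (@Ph 3 isT) ZHad))).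
Definition Dd : zx 1 1 := ZComp G1 (ZComp G1 (@Ph 4 isT)).
Definition Ga : zx 1 1 := gadL (ZComp (ZSpider 1 0) (ZComp Dd ZHad)).
Definition Tri : zx 1 1 := ZComp Pd5 (ZComp Ga (ZComp Mm (@Ph 2 isT))).

Lemma ScQ : interp Sc = M2Q qr q0 q0 qr.
Proof. rewrite /Sc /Pd5 /G1 /e1; evalQ. by []. Qed.

Lemma TriQ : interp Tri = M2Q q1 q1 q0 q1.
Proof. rewrite /Tri /Pd5 /Ga /Dd /Mm /G1 /e1; evalQ. by []. Qed.

Lemma idE : interp ZId = M2 1 0 0 1.
Proof.
apply/matrixP => i j; rewrite !mxE.
by case: i => [[|[|i]] Hi]; case: j => [[|[|j]] Hj].
Qed.

Lemma TriE : interp Tri = M2 1 1 0 1.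
Proof. by rewrite TriQ /M2Q emb0 emb1. Qed.

Lemma ScE : interp Sc = M2 r 0 0 r.
Proof. by rewrite ScQ /M2Q emb0 embR. Qed.

Lemma diagM_M2 a b c d : diagM (M2 a b c d) = M2 (a + c) 0 0 (b + d).
Proof. by rewrite /diagM !mxE. Qed.

Fixpoint tpow (n : nat) : zx 1 1 :=
  match n with 0 => ZId | n'.+1 => ZComp Tri (tpow n') end.

Lemma tpowE n : interp (tpow n) = M2 1 n%:R 0 1.
Proof.
elim: n => [|n IH]; first by rewrite idE.
rewrite [tpow _]/= compE TriE IH M2_mul; apply: M2_ext; rewrite ?natrS; ring.
Qed.

Lemma rr : r * r = 2^-1.
Proof. by rewrite -invfM s2. Qed.

Definition Dn (n : nat) : zx 1 1 :=
  ZComp Sc (gadL (ZComp (ZSpider 1 0) (ZComp ZHad (tpow n)))).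

Lemma DnE n : interp (Dn n) = M2 1 0 0 n%:R.
Proof.
rewrite /Dn compE gadZ compE ScE hadE tpowE M2_mul diagM_M2 M2_mul.
have h2 : 2 * 2^-1 = 1 :> algC by rewrite mulfV // pnatr_eq0.
apply: M2_ext.
- by transitivity (2 * (r * r)); [ring | rewrite rr h2].
- by ring.
- by ring.
- by transitivity (2 * (r * r) * n%:R); [ring | rewrite rr h2 mul1r].
Qed.

Definition qh : Q4 := ((2%:R)^-1, 0, 0, 0).
Definition Lh : zx 1 1 := ZComp Xd (ZComp Tri Xd).
Definition Hf : zx 1 1 := ZComp Sc (ZComp Sc (ZComp Sc
   (gadL (ZComp (ZSpider 1 0) (ZComp (@Ph 4 isT) (ZComp ZHad (ZComp Lh Lh))))))).

Lemma HfQ : interp Hf = M2Q q1 q0 q0 qh.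
Proof.
rewrite /Hf /Lh ?compE; repeat (rewrite gadZ ?compE); rewrite ?HQ ?PhQ ?XQ ?TriQ ?ScQ; qnorm;
  repeat (qmul; rewrite diagMQ; qnorm); qmul.
by [].
Qed.

Lemma HfE : interp Hf = M2 1 0 0 2^-1.
Proof. by rewrite HfQ /M2Q emb0 emb1 embH. Qed.

Fixpoint hpow (k : nat) : zx 1 1 :=
  match k with 0 => ZId | k'.+1 => ZComp Hf (hpow k') end.

Lemma hpowE k : interp (hpow k) = M2 1 0 0 (2^-1 ^+ k).
Proof.
elim: k => [|k IH]; first by rewrite idE expr0.
rewrite [hpow _]/= compE HfE IH M2_mul; apply: M2_ext; rewrite ?exprS; ring.
Qed.

Lemma triangleE : triangle_mx = M2 1 1 0 1.
Proof.
apply/matrixP => i j; rewrite !mxE.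
by case: i => [[|[|i]] Hi]; case: j => [[|[|j]] Hj].
Qed.

Lemma lambdaE l : lambda_mx l = M2 1 0 0 l.
Proof.
apply/matrixP => i j; rewrite !mxE.
by case: i => [[|[|i]] Hi]; case: j => [[|[|j]] Hj].
Qed.

Theorem mainTheorem2 :
  (exists d : zx 1 1, interp d = triangle_mx) /\
  (forall l : algC, dyadic l -> 0 <= l -> exists d : zx 1 1, interp d = lambda_mx l).
Proof.
split; first by exists Tri; rewrite TriE triangleE.
move=> l [a [k ->]] hl.
have ha : 0 <= a.
  by move: hl; rewrite pmulr_lge0 ?invr_gt0 ?exprn_gt0 // ler0z.
clear hl; case: a ha => // n _.
exists (ZComp (Dn n) (hpow k)).
rewrite compE DnE hpowE M2_mul lambdaE; apply: M2_ext; rewrite ?exprVn; ring.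
Qed.
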